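(* Let $W\in\{\mathrm{A}_{\frac12\infty},\mathrm{D}_{\frac12\infty}\}$ and $d\ge1$. The Coxeter element $Cox^{(d)}_W$, an endomorphism of $H_{W,\mathbb{C}}$, extends to an invertible bounded operator (with bounded inverse) on $\overline H_{W,\mathbb{C}}$.
   Context: Index sets: $C_{W,0}=\{c_0^{(n)}:n\ge1\}$ (type A) or $\{c_0^{(n)}:n\ge1\}\cup\{c_0^\pm\}$ (type D); $C_{W,1}=\{c_1^{(n)}:n\ge1\}$; $C_W=C_{W,0}\sqcup C_{W,1}$; $c_0^{(n)}$ is adjacent to $c_1^{(n)}$ and $c_1^{(n+1)}$, and in type D $c_0^\pm$ are adjacent to $c_1^{(1)}$; nothing else is adjacent. $H_{W,\mathbb{C}}=\bigoplus_{c\in C_W}\mathbb{C}\gamma_c$ with $H_{W,i,\mathbb{C}}=\bigoplus_{c\in C_{W,i}}\mathbb{C}\gamma_c$, Hermitian product making $\{\gamma_c\}$ orthonormal, and $\overline H_{W,\mathbb{C}}$ its $\ell^2$-completion. $J_W$ is the bilinear form with $J_W(\gamma_c,\gamma_{c'})=1$ if $c=c'$, $-1$ if $c\in C_{W,0}$, $c'\in C_{W,1}$ adjacent, $0$ otherwise. The Coxeter element (geometrically the product $\sigma_{W,0}\circ\sigma_{W,1}$ of the monodromies around $0$ and $1$ of the fibration defined by $f_W^{(d)}$) is defined by: for $u\in H_{W,0,\mathbb{C}}$, $Cox^{(d)}_W(u)=(-1)^{d-1}\big(u+\sum_{c\in C_{W,1}}J_W(u,\gamma_c)\gamma_c-\sum_{c\in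 C_{W,1}}\sum_{e\in C_{W,0}}J_W(u,\gamma_c)J_W(\gamma_e,\gamma_c)\gamma_e\big)$; for $u\in H_{W,1,\mathbb{C}}$, $Cox^{(d)}_W(u)=(-1)^{d-1}\big(u-\sum_{c\in C_{W,0}}J_W(\gamma_c,u)\gamma_c\big)$. *)

(* Defs.v *)
From HB Require Import structures.
From mathcomp Require Import all_boot all_order all_algebra.
From mathcomp Require Import complex.
From mathcomp Require Import all_classical all_reals ereal sequences esum.
Set Implicit Arguments. Unset Strict Implicit. Unset Printing Implicit Defensive.
Import Order.TTheory GRing.Theory Num.Theory.
Local Open Scope ring_scope.
Local Open Scope classical_set_scope.

Inductive Wtype := WA | WD.
Definition Wtype_eqb (a b : Wtype) : bool :=
  match a, b with WA, WA | WD, WD => true | _, _ => false end.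

(* Index universe: (inl (inl n)) = c_0^{(n)}, (inl (inr n)) = c_1^{(n)},
   (inr true) = c_0^+, (inr false) = c_0^-.  Only n >= 1 is used. *)
Definition idx := ((nat + nat) + bool)%type.
Definition c0 (n : nat) : idx := inl (inl n).
Definition c1 (n : nat) : idx := inl (inr n).
Definition c0pm (b : bool) : idx := inr b.

Definition inC0b (W : Wtype) (c : idx) : bool :=
  match c with
  | inl (inl n) => (1 <= n)%N
  | inl (inr _) => false
  | inr _ => Wtype_eqb W WD
  end.
Definition inC1b (W : Wtype) (c : idx) : bool :=
  match c with
  | inl (inr n) => (1 <= n)%N
  | _ => false
  end.

Definition CW0 (W : Wtype) : set idx := [set c | inC0b W c].
Definition CW1 (W : Wtype) : set idx := [set c | inC1b W c].
Definition CW (W : Wtype) : set idx := CW0 W `|` CW1 W.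

(* adjacency of e \in C_{W,0} with c \in C_{W,1} (false whenever e \notin C_{W,0}
   or c \notin C_{W,1}) *)
Definition adj01 (W : Wtype) (e c : idx) : bool :=
  match e, c with
  | inl (inl n), inl (inr m) => (1 <= n)%N && ((m == n) || (m == n.+1))
  | inr _, inl (inr m) => Wtype_eqb W WD && (m == 1)%N
  | _, _ => false
  end.

Section Cox.
Variable R : realType.
Local Notation C := (R[i]).

Definition gamma (c : idx) : idx -> C := fun x => if x == c then 1 else 0.

Definition JW (W : Wtype) (c c' : idx) : C :=
  if c == c' then 1 else if adj01 W c c' then -1 else 0.

Definition inH (W : Wtype) (u : idx -> C) : Prop :=
  finite_set [set c | u c != 0] /\ (forall c, ~ CW W c -> u c = 0).

(* bilinear extension: J_W(u, gamma_c) and J_W(gamma_c, u) for u \in H_{W,C} *)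
Definition JWl (W : Wtype) (u : idx -> C) (c : idx) : C :=
  \sum_(c' \in CW W) u c' * JW W c' c.
Definition JWr (W : Wtype) (c : idx) (u : idx -> C) : C :=
  \sum_(c' \in CW W) JW W c c' * u c'.

Definition sgn (d : nat) : C := (-1) ^+ (d.-1).

Definition Cox0 (W : Wtype) (d : nat) (u : idx -> C) : idx -> C := fun x =>
  sgn d * (u x + \sum_(c \in CW1 W) JWl W u c * gamma c x
               - \sum_(c \in CW1 W) \sum_(e \in CW0 W)
                   JWl W u c * JW W e c * gamma e x).
Definition Cox1 (W : Wtype) (d : nat) (u : idx -> C) : idx -> C := fun x =>
  sgn d * (u x - \sum_(c \in CW0 W) JWr W c u * gamma c x).

(* Cox on H_{W,C} = H_{W,0,C} (+) H_{W,1,C} *)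
Definition CoxW (W : Wtype) (d : nat) (u : idx -> C) : idx -> C := fun x =>
  Cox0 W d (fun y => if inC0b W y then u y else 0) x
  + Cox1 W d (fun y => if inC1b W y then u y else 0) x.

Definition sqmod (z : C) : R := (@complex.Re R z) ^+ 2 + (@complex.Im R z) ^+ 2.

Definition l2sq (W : Wtype) (u : idx -> C) : \bar R :=
  (\esum_(c in CW W) (sqmod (u c))%:E)%E.

(* the l^2-completion \bar H_{W,C} *)
Definition inL2 (W : Wtype) (u : idx -> C) : Prop :=
  (forall c, ~ CW W c -> u c = 0) /\ (l2sq W u < +oo)%E.

Definition bounded_op (W : Wtype) (T : (idx -> C) -> (idx -> C)) : Prop :=
  (forall u, inL2 W u -> inL2 W (T u)) /\
  (forall (a : C) u v, inL2 W u -> inL2 W v ->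
      T (fun c => a * u c + v c) = (fun c => a * T u c + T v c)) /\
  (exists M : R, forall u, inL2 W u -> (l2sq W (T u) <= (M ^+ 2)%:E * l2sq W u)%E).

End Cox.

(* Main.v *)
Require Import Defs.
From HB Require Import structures.
From mathcomp Require Import all_boot all_order all_algebra.
From mathcomp Require Import complex.
From mathcomp Require Import all_classical all_reals ereal sequences esum.
From mathcomp Require Import ring lra zify.
Set Implicit Arguments. Unset Strict Implicit. Unset Printing Implicit Defensive.
Import Order.TTheory GRing.Theory Num.Theory.
Local Open Scope ring_scope.
Local Open Scope classical_set_scope.

Lemma c01F n m : (c0 n == c1 m) = false. Proof. by []. Qed.
Lemma c00E n m : (c0 n == c0 m) = (n == m). Proof. by []. Qed.
Lemma c11E n m : (c1 n == c1 m) = (n == m). Proof. by []. Qed.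
Lemma adj0 W e c : adj01 W e c -> inC0b W e.
Proof. by case: e => [[n|n]|b]; case: c => [[m|m]|b'] //= /andP[]. Qed.
Lemma adj1 W e c : adj01 W e c -> inC1b W c.
Proof.
case: e => [[n|n]|b]; case: c => [[m|m]|b'] //=.
  by case/andP=> Hn /orP[/eqP->|/eqP->].
by case/andP=> _ /eqP->.
Qed.
Lemma C10 W x : inC1b W x -> inC0b W x = false.
Proof. by case: x => [[n|n]|b]. Qed.
Lemma C01 W x : inC0b W x -> inC1b W x = false.
Proof. by case: x => [[n|n]|b]. Qed.

Section S.
Variable R : realType.
Local Notation C := (R[i]).

Lemma fsum_seqE (A : set idx) (s : seq idx) (F : idx -> C) : uniq s ->
  (forall i, A i -> F i != 0 -> i \in s) -> (forall i, i \in s -> ~ A i -> F i = 0) ->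
  \sum_(i \in A) F i = \sum_(i <- s) F i.
Proof.
move=> us h1 h2.
rewrite (fsbigE (seq.filter (fun i => `[< A i >]) s)).
- rewrite big_filter_cond [RHS](bigID (fun i => `[< A i >])) /=.
  rewrite [X in _ = _ + X]big1_seq ?addr0.
    apply: eq_bigl => i; apply/idP/idP => [/andP[]//|H]; rewrite H mem_set //; exact/asboolP.
  move=> i /andP[Hi iS]; apply: h2 => // Ai; move/negP: Hi; apply; exact/asboolP.
- exact: filter_uniq.
- by move=> i /=; rewrite mem_filter => /andP[/asboolP].
- move=> i Ai; rewrite mem_filter => /negP Hn; apply/eqP; apply/negP => /negP/(h1 _ Ai) iS.
  by apply: Hn; rewrite iS andbT; apply/asboolP.
Qed.

Variable W : Wtype.

Lemma CWP i : CW W i <-> (inC0b W i || inC1b W i).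
Proof. rewrite /CW /CW0 /CW1 /setU /=; split => [[]->|/orP[]->]; rewrite ?orbT; auto. Qed.

Lemma JW_neq0 a b : JW R W a b != 0 -> a = b \/ adj01 W a b.
Proof. rewrite /JW; case: (a =P b) => [->|_]; first by left. by case: (adj01 W a b); [right|rewrite eqxx]. Qed.

Lemma JW_outl i c : ~ CW W i -> CW W c -> JW R W i c = 0.
Proof.
move=> Hi Hc; have [/JW_neq0 [E|/adj0 H]|/negPn/eqP//] := boolP (JW R W i c != 0); exfalso; apply: Hi.
  by rewrite E. by apply/CWP; rewrite H.
Qed.
Lemma JW_outr i c : ~ CW W i -> CW W c -> JW R W c i = 0.
Proof.
move=> Hi Hc; have [/JW_neq0 [E|/adj1 H]|/negPn/eqP//] := boolP (JW R W c i != 0); exfalso; apply: Hi.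
  by rewrite -E. by apply/CWP; rewrite H orbT.
Qed.

Definition sl (σ : idx -> option idx) (v : idx -> C) x : C :=
  if σ x is Some y then v y else 0.
Definition k1 (x : idx) := match x with inl (inr m) => if (1 <= m)%N then Some (c0 m) else None | _ => None end.
Definition k2 (x : idx) := match x with inl (inr m) => if (2 <= m)%N then Some (c0 m.-1) else None | _ => None end.
Definition k3 (x : idx) := match x with inl (inr m) => if Wtype_eqb W WD && (m == 1)%N then Some (c0pm true) else None | _ => None end.
Definition k4 (x : idx) := match x with inl (inr m) => if Wtype_eqb W WD && (m == 1)%N then Some (c0pm false) else None | _ => None end.
Definition t1 (x : idx) := match x with inl (inl n) => if (1 <= n)%N then Some (c1 n) else None | _ => None end.
Definition t2 (x : idx) := match x with inl (inl n) => if (1 <= n)%N then Some (c1 n.+1) else None | _ => None end.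
Definition t3 (x : idx) := match x with inr b => if b && Wtype_eqb W WD then Some (c1 1) else None | _ => None end.
Definition t4 (x : idx) := match x with inr b => if ~~ b && Wtype_eqb W WD then Some (c1 1) else None | _ => None end.

Definition Op := (idx -> C) -> (idx -> C).
Definition addO (O1 O2 : Op) : Op := fun u x => O1 u x + O2 u x.
Definition sclO (a : C) (O : Op) : Op := fun u x => a * O u x.
Definition idO : Op := fun u => u.

Definition Kop : Op := addO (addO (addO (sl k1) (sl k2)) (sl k3)) (sl k4).
Definition Ktop : Op := addO (addO (addO (sl t1) (sl t2)) (sl t3)) (sl t4).

Lemma fsum_gamma (A : set idx) g x :
  \sum_(c \in A) g c * gamma R c x = if `[< A x >] then g x else 0.
Proof.
case: asboolP => Ax.
  rewrite (@fsum_seqE A [:: x]) ?big_cons ?big_nil /gamma ?eqxx ?mulr1 ?addr0 //.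
    by move=> i _; rewrite /gamma; case: (x =P i) => [->|_]; rewrite ?mem_head // mulr0 eqxx.
  by move=> i; rewrite inE => /eqP ->.
by apply: fsbig1 => i Ai; rewrite /gamma; case: eqP => [E|_]; [rewrite E in Ax|rewrite mulr0].
Qed.

Lemma adjE1 e m : adj01 W e (c1 m) -> e \in [:: c0 m; c0 m.-1; c0pm true; c0pm false].
Proof.
case: e => [[n|n]|b] //=.
  by case/andP=> _ /orP[/eqP->|/eqP->]; rewrite !inE eqxx ?orbT.
by case: b; rewrite !inE eqxx ?orbT.
Qed.

Lemma JWl_C1 v c : inC1b W c -> JWl W v c = v c - Kop v c.
Proof.
case: c => [[n|m]|b] //= Hm.
rewrite /JWl (@fsum_seqE _ [:: c1 m; c0 m; c0 m.-1; c0pm true; c0pm false]).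
- rewrite !big_cons big_nil /JW /Kop /addO /sl /k1 /k2 /k3 /k4 /=.
  rewrite eqxx; case: m Hm => [|[|m]] // _; case: W => /=; rewrite ?eqxx ?orbT /=;
  rewrite /c0 /c1 /c0pm; ring.
- case: m Hm => [|[|m]] // _; rewrite /= !inE /=.
  by rewrite c00E gtn_eqF.
- move=> i _; rewrite mulf_eq0 negb_or => /andP[_ /JW_neq0 [->|/adjE1 H]].
    by rewrite mem_head.
  by rewrite in_cons H orbT.
- by move=> i _ Hi; rewrite JW_outl ?mulr0 //; apply/CWP; rewrite /= ?Hm ?orbT.
Qed.

Lemma adjE0 n c : adj01 W (c0 n) c -> c \in [:: c1 n; c1 n.+1].
Proof. by case: c => [[m|m]|b] //= /andP[_ /orP[/eqP->|/eqP->]]; rewrite !inE eqxx ?orbT. Qed.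
Lemma adjEpm b c : adj01 W (c0pm b) c -> c = c1 1.
Proof. by case: c => [[m|m]|b'] //= /andP[_ /eqP->]. Qed.

Lemma JWr_C0 v c : inC0b W c -> JWr W c v = v c - Ktop v c.
Proof.
case: c => [[n|m]|b] //= Hn.
  rewrite /JWr (@fsum_seqE _ [:: c0 n; c1 n; c1 n.+1]).
  - rewrite !big_cons big_nil /JW /Ktop /addO /sl /t1 /t2 /t3 /t4 /= !eqxx Hn ?orbT /=.
    rewrite /c0 /c1 /c0pm; ring.
  - by rewrite /= !inE /= c11E ltn_eqF.
  - move=> i _; rewrite mulf_eq0 negb_or => /andP[/JW_neq0 [<-|/adjE0 H] _].
      by rewrite mem_head.
    by rewrite in_cons H orbT.
  - by move=> i _ Hi; rewrite JW_outr ?mul0r //; apply/CWP; rewrite /= ?Hn ?orbT.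
rewrite /JWr (@fsum_seqE _ [:: c0pm b; c1 1]).
- rewrite !big_cons big_nil /JW /Ktop /addO /sl /t1 /t2 /t3 /t4 /= !eqxx Hn /=.
  by case: b; rewrite /c0 /c1 /c0pm /=; ring.
- by [].
- move=> i _; rewrite mulf_eq0 negb_or => /andP[/JW_neq0 [<-|/adjEpm ->] _].
    by rewrite mem_head.
  by rewrite !inE eqxx orbT.
- by move=> i _ Hi; rewrite JW_outr ?mul0r //; apply/CWP; rewrite /= ?Hn ?orbT.
Qed.

Lemma sum_C1_JW g x : inC0b W x -> \sum_(c \in CW1 W) g c * JW R W x c = - Ktop g x.
Proof.
case: x => [[n|m]|b] //= Hn.
  rewrite (@fsum_seqE _ [:: c1 n; c1 n.+1]).
  - rewrite !big_cons big_nil /JW /Ktop /addO /sl /t1 /t2 /t3 /t4 /= !eqxx Hn ?orbT /=.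
    rewrite /c0 /c1 /c0pm; ring.
  - by rewrite /= !inE /= c11E ltn_eqF.
  - move=> i Hi; rewrite mulf_eq0 negb_or => /andP[_ /JW_neq0 [E|/adjE0 H]].
      by rewrite -E in Hi.
    by [].
  - move=> i; rewrite !inE => /orP[/eqP->|/eqP->] H; exfalso; apply: H; by rewrite /CW1 /= ?Hn.
rewrite (@fsum_seqE _ [:: c1 1]).
- rewrite !big_cons big_nil /JW /Ktop /addO /sl /t1 /t2 /t3 /t4 /= !eqxx Hn /=.
  by case: b; rewrite /c0 /c1 /c0pm /=; ring.
- by [].
- move=> i Hi; rewrite mulf_eq0 negb_or => /andP[_ /JW_neq0 [E|/adjEpm ->]].
    by rewrite -E in Hi.
  by rewrite mem_head.
- move=> i; rewrite !inE => /eqP-> H; exfalso; apply: H; by rewrite /CW1 /=.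
Qed.

Definition good (σ : idx -> option idx) (P Q : idx -> bool) :=
  (forall x y, σ x = Some y -> P x /\ Q y) /\
  (forall x x' y, σ x = Some y -> σ x' = Some y -> x = x').

Lemma good_k1 : good k1 (inC1b W) (inC0b W).
Proof. split.
  by move=> [[n|m]|b] y //=; case: ifP => // H [<-].
by move=> [[n|m]|b] [[n'|m']|b'] y //=; do 2 case: ifP => //; move=> _ _ <- [->].
Qed.
Lemma good_k2 : good k2 (inC1b W) (inC0b W).
Proof. split.
  by move=> [[n|m]|b] y //=; case: ifP => // H [<-]; case: m H => [|[|m]].
move=> [[n|m]|b] [[n'|m']|b'] y //=; do 2 case: ifP => //; move=> H H' <- [E].
by congr (inl (inr _)); lia.
Qed.
Lemma good_k3 : good k3 (inC1b W) (inC0b W).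
Proof. split.
  by move=> [[n|m]|b] y //=; case: ifP => // /andP[H /eqP->] [<-].
by move=> [[n|m]|b] [[n'|m']|b'] y //=; do 2 case: ifP => //; move=> /andP[_ /eqP->] /andP[_ /eqP->].
Qed.
Lemma good_k4 : good k4 (inC1b W) (inC0b W).
Proof. split.
  by move=> [[n|m]|b] y //=; case: ifP => // /andP[H /eqP->] [<-].
by move=> [[n|m]|b] [[n'|m']|b'] y //=; do 2 case: ifP => //; move=> /andP[_ /eqP->] /andP[_ /eqP->].
Qed.
Lemma good_t1 : good t1 (inC0b W) (inC1b W).
Proof. split.
  by move=> [[n|m]|b] y //=; case: ifP => // H [<-].
by move=> [[n|m]|b] [[n'|m']|b'] y //=; do 2 case: ifP => //; move=> _ _ <- [->].
Qed.
Lemma good_t2 : good t2 (inC0b W) (inC1b W).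
Proof. split.
  by move=> [[n|m]|b] y //=; case: ifP => // H [<-].
by move=> [[n|m]|b] [[n'|m']|b'] y //=; do 2 case: ifP => //; move=> _ _ <- [->].
Qed.
Lemma good_t3 : good t3 (inC0b W) (inC1b W).
Proof. split.
  by move=> [[n|m]|b] y //=; case: ifP => // /andP[_ H] [<-].
by move=> [[n|m]|b] [[n'|m']|b'] y //=; do 2 case: ifP => //; move=> /andP[/= -> _] /andP[/= -> _].
Qed.
Lemma good_t4 : good t4 (inC0b W) (inC1b W).
Proof. split.
  by move=> [[n|m]|b] y //=; case: ifP => // /andP[_ H] [<-].
by move=> [[n|m]|b] [[n'|m']|b'] y //=; do 2 case: ifP => //; move=> /andP[/negPf -> _] /andP[/negPf -> _].
Qed.

Lemma sl_ext σ P Q v w x : good σ P Q -> (forall y, Q y -> v y = w y) -> sl σ v x = sl σ w x.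
Proof. move=> [H _] E; rewrite /sl; case Hx: (σ x) => [y|] //; apply: E; exact: (H _ _ Hx).2. Qed.
Lemma sl_zero σ P Q v x : good σ P Q -> ~~ P x -> sl σ v x = 0.
Proof. move=> [H _] Px; rewrite /sl; case Hx: (σ x) => [y|] //; by move: Px; rewrite (H _ _ Hx).1. Qed.
Lemma sl_add σ v w x : sl σ (fun y => v y + w y) x = sl σ v x + sl σ w x.
Proof. by rewrite /sl; case: (σ x) => [y|]; rewrite ?addr0. Qed.
Lemma sl_scl σ a v x : sl σ (fun y => a * v y) x = a * sl σ v x.
Proof. by rewrite /sl; case: (σ x) => [y|]; rewrite ?mulr0. Qed.

Lemma Kop_ext v w x : (forall y, inC0b W y -> v y = w y) -> Kop v x = Kop w x.
Proof.
move=> E; rewrite /Kop /addO (sl_ext x good_k1 E) (sl_ext x good_k2 E).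
by rewrite (sl_ext x good_k3 E) (sl_ext x good_k4 E).
Qed.
Lemma Ktop_ext v w x : (forall y, inC1b W y -> v y = w y) -> Ktop v x = Ktop w x.
Proof.
move=> E; rewrite /Ktop /addO (sl_ext x good_t1 E) (sl_ext x good_t2 E).
by rewrite (sl_ext x good_t3 E) (sl_ext x good_t4 E).
Qed.
Lemma Kop_zero v x : ~~ inC1b W x -> Kop v x = 0.
Proof.
move=> H; rewrite /Kop /addO (sl_zero v good_k1 H) (sl_zero v good_k2 H).
by rewrite (sl_zero v good_k3 H) (sl_zero v good_k4 H) !addr0.
Qed.
Lemma Ktop_zero v x : ~~ inC0b W x -> Ktop v x = 0.
Proof.
move=> H; rewrite /Ktop /addO (sl_zero v good_t1 H) (sl_zero v good_t2 H).
by rewrite (sl_zero v good_t3 H) (sl_zero v good_t4 H) !addr0.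
Qed.
Lemma Kop_add v w x : Kop (fun y => v y + w y) x = Kop v x + Kop w x.
Proof. rewrite /Kop /addO !sl_add; ring. Qed.
Lemma Ktop_add v w x : Ktop (fun y => v y + w y) x = Ktop v x + Ktop w x.
Proof. rewrite /Ktop /addO !sl_add; ring. Qed.
Lemma Kop_scl a v x : Kop (fun y => a * v y) x = a * Kop v x.
Proof. rewrite /Kop /addO !sl_scl; ring. Qed.
Lemma Ktop_scl a v x : Ktop (fun y => a * v y) x = a * Ktop v x.
Proof. rewrite /Ktop /addO !sl_scl; ring. Qed.

Definition E1 : Op := addO idO (sclO (-1) Kop).
Definition E2 : Op := addO idO Ktop.
Definition F1 : Op := addO idO Kop.
Definition F2 : Op := addO idO (sclO (-1) Ktop).
Definition Texp d : Op := sclO (sgn R d) (fun u => E2 (E1 u)).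
Definition Sexp d : Op := sclO (sgn R d) (fun u => F1 (F2 u)).

Lemma CoxW_eq d u : (forall c, ~ CW W c -> u c = 0) -> CoxW W d u = Texp d u.
Proof.
move=> Hu; apply/funext => x.
rewrite /CoxW /Cox0 /Cox1 !fsum_gamma.
under eq_fsbigr => c _ do rewrite fsum_gamma.
set u0 := fun y => if inC0b W y then u y else 0.
set u1 := fun y => if inC1b W y then u y else 0.
rewrite /Texp /sclO /E2 /E1 /addO /idO /sclO Ktop_add Ktop_scl.
have K0 : forall z, Kop u0 z = Kop u z by move=> z; apply: Kop_ext => y Hy; rewrite /u0 Hy.
have K1 : forall z, Ktop u1 z = Ktop u z by move=> z; apply: Ktop_ext => y Hy; rewrite /u1 Hy.
case H0: (inC0b W x).
  have H1 : inC1b W x = false := C01 H0.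
  rewrite (asboolT (H0 : CW0 W x)) (asboolF (_ : ~ CW1 W x)); last by rewrite /CW1 /= H1.
  rewrite (sum_C1_JW (JWl W u0)) // JWr_C0 //.
  rewrite (@Ktop_ext (JWl W u0) (fun c => -1 * Kop u c)); last first.
    by move=> y Hy; rewrite JWl_C1 // K0 /u0 C10 //; ring.
  rewrite Ktop_scl K1 (Kop_zero _ (negbT H1)) /u1 H1; ring.
case H1: (inC1b W x).
  rewrite (asboolT (H1 : CW1 W x)) (asboolF (_ : ~ CW0 W x)); last by rewrite /CW0 /= H0.
  rewrite fsbig1 // JWl_C1 // K0 /u0 H0 !(Ktop_zero _ (negbT H0)); ring.
have N0 : ~ CW0 W x by rewrite /CW0 /= H0.
have N1 : ~ CW1 W x by rewrite /CW1 /= H1.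
rewrite (asboolF N1) (asboolF N0).
have Hx : u x = 0 by apply: Hu; move/CWP; rewrite H0 H1.
rewrite fsbig1 // Hx !(Ktop_zero _ (negbT H0)) !(Kop_zero _ (negbT H1)); ring.
Qed.
Lemma sqmod_ge0 (a : C) : 0 <= sqmod a.
Proof. by rewrite /sqmod addr_ge0 // sqr_ge0. Qed.
Lemma sqmod_add (a b : C) : sqmod (a + b) <= sqmod a + sqmod a + sqmod b + sqmod b.
Proof. case: a => a1 a2; case: b => b1 b2; rewrite /sqmod /= -subr_ge0.
have -> : a1 ^+ 2 + a2 ^+ 2 + (a1 ^+ 2 + a2 ^+ 2) + (b1 ^+ 2 + b2 ^+ 2) + (b1 ^+ 2 + b2 ^+ 2) -
  ((a1 + b1) ^+ 2 + (a2 + b2) ^+ 2) = (a1 - b1) ^+ 2 + (a2 - b2) ^+ 2 by ring.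
by rewrite addr_ge0 // sqr_ge0.
Qed.
Lemma sqmod_mul (a b : C) : sqmod (a * b) = sqmod a * sqmod b.
Proof. case: a => a1 a2; case: b => b1 b2; rewrite /sqmod /=. ring. Qed.
Lemma sqmodN1 : sqmod (-1 : C) = 1.
Proof. rewrite /sqmod /=. ring. Qed.
Lemma sqmod0 : sqmod (0 : C) = 0.
Proof. rewrite /sqmod /=. ring. Qed.

Lemma sgn_sq d : sgn R d * sgn R d = 1.
Proof. by rewrite /sgn -exprMn mulrNN mulr1 expr1n. Qed.
Lemma sqmod_sgn d : sqmod (sgn R d) = 1.
Proof. rewrite /sgn; elim: d.-1 => [|n IH]; first by rewrite expr0 /sqmod /=; ring.
by rewrite exprS sqmod_mul sqmodN1 IH mulr1. Qed.

Lemma KopKop v x : Kop (Kop v) x = 0.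
Proof.
rewrite (@Kop_ext _ (fun y => 0 * v y)); first by rewrite Kop_scl mul0r.
by move=> y Hy; rewrite mul0r Kop_zero // C01.
Qed.
Lemma KtopKtop v x : Ktop (Ktop v) x = 0.
Proof.
rewrite (@Ktop_ext _ (fun y => 0 * v y)); first by rewrite Ktop_scl mul0r.
by move=> y Hy; rewrite mul0r Ktop_zero // C10.
Qed.

Lemma E1_lin a u v : E1 (fun c => a * u c + v c) = fun y => a * E1 u y + E1 v y.
Proof. apply/funext => y; rewrite /E1 /addO /idO /sclO Kop_add Kop_scl; ring. Qed.
Lemma E2_lin a u v : E2 (fun c => a * u c + v c) = fun y => a * E2 u y + E2 v y.
Proof. apply/funext => y; rewrite /E2 /addO /idO /sclO Ktop_add Ktop_scl; ring. Qed.
Lemma F1_lin a u v : F1 (fun c => a * u c + v c) = fun y => a * F1 u y + F1 v y.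
Proof. apply/funext => y; rewrite /F1 /addO /idO /sclO Kop_add Kop_scl; ring. Qed.
Lemma F2_lin a u v : F2 (fun c => a * u c + v c) = fun y => a * F2 u y + F2 v y.
Proof. apply/funext => y; rewrite /F2 /addO /idO /sclO Ktop_add Ktop_scl; ring. Qed.
Lemma Texp_lin d a u v : Texp d (fun c => a * u c + v c) = fun y => a * Texp d u y + Texp d v y.
Proof. apply/funext => y; rewrite /Texp /sclO E1_lin E2_lin; ring. Qed.
Lemma Sexp_lin d a u v : Sexp d (fun c => a * u c + v c) = fun y => a * Sexp d u y + Sexp d v y.
Proof. apply/funext => y; rewrite /Sexp /sclO F2_lin F1_lin; ring. Qed.

Lemma F1_scl a u : F1 (fun c => a * u c) = fun y => a * F1 u y.
Proof. apply/funext => y; rewrite /F1 /addO /idO /sclO Kop_scl; ring. Qed.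
Lemma F2_scl a u : F2 (fun c => a * u c) = fun y => a * F2 u y.
Proof. apply/funext => y; rewrite /F2 /addO /idO /sclO Ktop_scl; ring. Qed.
Lemma E1_scl a u : E1 (fun c => a * u c) = fun y => a * E1 u y.
Proof. apply/funext => y; rewrite /E1 /addO /idO /sclO Kop_scl; ring. Qed.
Lemma E2_scl a u : E2 (fun c => a * u c) = fun y => a * E2 u y.
Proof. apply/funext => y; rewrite /E2 /addO /idO /sclO Ktop_scl; ring. Qed.

Lemma F2E2 v : F2 (E2 v) = v.
Proof. apply/funext => x; rewrite /F2 /E2 /addO /idO /sclO Ktop_add KtopKtop; ring. Qed.
Lemma E2F2 v : E2 (F2 v) = v.
Proof. apply/funext => x; rewrite /F2 /E2 /addO /idO /sclO Ktop_add Ktop_scl KtopKtop; ring. Qed.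
Lemma F1E1 v : F1 (E1 v) = v.
Proof. apply/funext => x; rewrite /F1 /E1 /addO /idO /sclO Kop_add Kop_scl KopKop; ring. Qed.
Lemma E1F1 v : E1 (F1 v) = v.
Proof. apply/funext => x; rewrite /F1 /E1 /addO /idO /sclO Kop_add KopKop; ring. Qed.

Lemma ST d u : Sexp d (Texp d u) = u.
Proof.
rewrite /Sexp /Texp /sclO F2_scl F1_scl F2E2 F1E1; apply/funext => y; by rewrite mulrA sgn_sq mul1r.
Qed.
Lemma TS d u : Texp d (Sexp d u) = u.
Proof.
rewrite /Sexp /Texp /sclO E1_scl E2_scl E1F1 E2F2; apply/funext => y; by rewrite mulrA sgn_sq mul1r.
Qed.

Definition zout (u : idx -> C) := forall c, ~ CW W c -> u c = 0.
Definition Zp (O : Op) := forall u, zout u -> zout (O u).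
Definition Bnd (O : Op) := exists M : R, 0 <= M /\
  forall u, zout u -> (l2sq W (O u) <= M%:E * l2sq W u)%E.

Lemma l2sq_ge0 (u : idx -> C) : (0 <= l2sq W u)%E.
Proof. by apply: esum_ge0 => x _; rewrite lee_fin sqmod_ge0. Qed.

Lemma l2sq_add (u w : idx -> C) : (l2sq W (fun x => (u x + w x)%R) <= l2sq W u + l2sq W u + l2sq W w + l2sq W w)%E.
Proof.
rewrite /l2sq -!esumD; try by move=> *; rewrite ?adde_ge0 // lee_fin sqmod_ge0.
by apply: le_esum => x _; rewrite -!EFinD lee_fin sqmod_add.
Qed.

Lemma splitM (a b : R) (L : \bar R) : 0 <= a -> 0 <= b -> ((a + b)%:E * L = a%:E * L + b%:E * L)%E.
Proof. by move=> ? ?; rewrite EFinD ge0_muleDl // lee_fin. Qed.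

Lemma Bnd_add O1 O2 : Bnd O1 -> Bnd O2 -> Bnd (addO O1 O2).
Proof.
move=> [M1 [M1p H1]] [M2 [M2p H2]]; exists (M1 + M1 + M2 + M2); split; first by rewrite !addr_ge0.
move=> u Hu; apply: le_trans (l2sq_add (O1 u) (O2 u)) _.
rewrite !splitM ?addr_ge0 //.
by repeat apply: leeD; [exact: H1|exact: H1|exact: H2|exact: H2].
Qed.

Lemma Bnd_scl a O : sqmod a = 1 -> Bnd O -> Bnd (sclO a O).
Proof.
move=> Ha [M [Mp H]]; exists M; split => // u Hu; apply: le_trans (H _ Hu).
by rewrite le_eqVlt; apply/orP; left; apply/eqP; apply: eq_esum => x _; rewrite /sclO sqmod_mul Ha mul1r.
Qed.

Lemma Bnd_comp O1 O2 : Zp O2 -> Bnd O1 -> Bnd O2 -> Bnd (fun u => O1 (O2 u)).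
Proof.
move=> Z [M1 [M1p H1]] [M2 [M2p H2]]; exists (M1 * M2); split; first by rewrite mulr_ge0.
move=> u Hu; apply: le_trans (H1 _ (Z _ Hu)) _.
by rewrite EFinM -muleA; apply: lee_wpmul2l; [rewrite lee_fin|exact: H2].
Qed.

Lemma Bnd_id : Bnd idO.
Proof. by exists 1; split => // u _; rewrite mul1e. Qed.

Lemma esum_sub (A B : set idx) (f : idx -> \bar R) : A `<=` B -> (forall x, 0 <= f x)%E ->
  (\esum_(x in A) f x <= \esum_(x in B) f x)%E.
Proof.
move=> AB f0; rewrite [leRHS](esumID A) //.
rewrite (_ : B `&` A = A); last by apply/seteqP; split => [x []//|x Ax]; split => //; exact: AB.
by apply: leeDl; apply: esum_ge0.
Qed.

Lemma Bnd_sl σ P Q : good σ P Q -> (forall y, Q y -> CW W y) -> Bnd (sl σ).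
Proof.
move=> [G Ginj] HQ; exists 1; split => // v _; rewrite mul1e /l2sq.
set D := [set x | σ x != None].
rewrite (esumID D); last by move=> *; rewrite lee_fin sqmod_ge0.
rewrite [X in (_ + X)%E]esum1 ?adde0; last first.
  move=> x [_ Hx]; rewrite /D /= in Hx; rewrite /sl; move: Hx; case: (σ x) => [a|] H.
    by exfalso; apply: H.
  by rewrite sqmod0.
rewrite (eq_esum (b := fun x => (sqmod (v (odflt x (σ x))))%:E)); last first.
  by move=> x [_ Hx]; rewrite /D /= in Hx; rewrite /sl; case: (σ x) Hx.
rewrite -(esum_image _ (fun x => odflt x (σ x)) (fun y => (sqmod (v y))%:E)); last first.
  move=> x x' /set_mem [_ Hx] /set_mem [_ Hx']; rewrite /D /= in Hx Hx'.
  case E: (σ x) Hx => [y|] // _; case E': (σ x') Hx' => [y'|] // _ /= Eyy.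
  by apply: (Ginj _ _ y) => //; rewrite E' Eyy.
apply: esum_sub; last by move=> x; rewrite lee_fin sqmod_ge0.
move=> y [x [_ Hx] <-]; rewrite /D /= in Hx; case E: (σ x) Hx => [z|] // _ /=.
exact: HQ (G _ _ E).2.
Qed.

Lemma Zp_sl σ P Q : good σ P Q -> (forall x, P x -> CW W x) -> Zp (sl σ).
Proof.
move=> [G _] HP u _ x Hx; rewrite /sl; case E: (σ x) => [y|] //.
by exfalso; apply: Hx; apply: HP; exact: (G _ _ E).1.
Qed.
Lemma Zp_add O1 O2 : Zp O1 -> Zp O2 -> Zp (addO O1 O2).
Proof. by move=> Z1 Z2 u Hu x Hx; rewrite /addO Z1 // Z2 // addr0. Qed.
Lemma Zp_scl a O : Zp O -> Zp (sclO a O).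
Proof. by move=> Z u Hu x Hx; rewrite /sclO Z // mulr0. Qed.
Lemma Zp_comp O1 O2 : Zp O1 -> Zp O2 -> Zp (fun u => O1 (O2 u)).
Proof. by move=> Z1 Z2 u Hu; apply: Z1; apply: Z2. Qed.
Lemma Zp_id : Zp idO.
Proof. by []. Qed.

Lemma in0CW x : inC0b W x -> CW W x. Proof. by move=> H; apply/CWP; rewrite H. Qed.
Lemma in1CW x : inC1b W x -> CW W x. Proof. by move=> H; apply/CWP; rewrite H orbT. Qed.

Lemma Bnd_Kop : Bnd Kop.
Proof.
rewrite /Kop; apply: Bnd_add; [apply: Bnd_add; [apply: Bnd_add|]|].
- exact: Bnd_sl good_k1 in0CW.
- exact: Bnd_sl good_k2 in0CW.
- exact: Bnd_sl good_k3 in0CW.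
- exact: Bnd_sl good_k4 in0CW.
Qed.
Lemma Bnd_Ktop : Bnd Ktop.
Proof.
rewrite /Ktop; apply: Bnd_add; [apply: Bnd_add; [apply: Bnd_add|]|].
- exact: Bnd_sl good_t1 in1CW.
- exact: Bnd_sl good_t2 in1CW.
- exact: Bnd_sl good_t3 in1CW.
- exact: Bnd_sl good_t4 in1CW.
Qed.
Lemma Zp_Kop : Zp Kop.
Proof.
rewrite /Kop; apply: Zp_add; [apply: Zp_add; [apply: Zp_add|]|].
- exact: Zp_sl good_k1 in1CW.
- exact: Zp_sl good_k2 in1CW.
- exact: Zp_sl good_k3 in1CW.
- exact: Zp_sl good_k4 in1CW.
Qed.
Lemma Zp_Ktop : Zp Ktop.
Proof.
rewrite /Ktop; apply: Zp_add; [apply: Zp_add; [apply: Zp_add|]|].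
- exact: Zp_sl good_t1 in0CW.
- exact: Zp_sl good_t2 in0CW.
- exact: Zp_sl good_t3 in0CW.
- exact: Zp_sl good_t4 in0CW.
Qed.

Lemma Zp_Texp d : Zp (Texp d).
Proof.
apply: Zp_scl; apply: Zp_comp; apply: Zp_add; try exact: Zp_id; try exact: Zp_Ktop;
  apply: Zp_scl; exact: Zp_Kop.
Qed.
Lemma Zp_Sexp d : Zp (Sexp d).
Proof.
apply: Zp_scl; apply: Zp_comp; apply: Zp_add; try exact: Zp_id; try exact: Zp_Kop;
  apply: Zp_scl; exact: Zp_Ktop.
Qed.
Lemma Zp_E1 : Zp E1. Proof. apply: Zp_add; [exact: Zp_id|apply: Zp_scl; exact: Zp_Kop]. Qed.
Lemma Zp_F2 : Zp F2. Proof. apply: Zp_add; [exact: Zp_id|apply: Zp_scl; exact: Zp_Ktop]. Qed.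

Lemma Bnd_Texp d : Bnd (Texp d).
Proof.
apply: Bnd_scl; first exact: sqmod_sgn.
apply: Bnd_comp; first exact: Zp_E1.
  apply: Bnd_add; [exact: Bnd_id|exact: Bnd_Ktop].
apply: Bnd_add; first exact: Bnd_id.
apply: Bnd_scl; [exact: sqmodN1|exact: Bnd_Kop].
Qed.
Lemma Bnd_Sexp d : Bnd (Sexp d).
Proof.
apply: Bnd_scl; first exact: sqmod_sgn.
apply: Bnd_comp; first exact: Zp_F2.
  apply: Bnd_add; [exact: Bnd_id|exact: Bnd_Kop].
apply: Bnd_add; first exact: Bnd_id.
apply: Bnd_scl; [exact: sqmodN1|exact: Bnd_Ktop].
Qed.
End S.

Lemma bounded_of (R : realType) (W : Wtype) (T O : Op R) :
  (forall u, zout W u -> T u = O u) -> Zp W O -> Bnd W O ->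
  (forall a u v, O (fun c => a * u c + v c) = fun c => a * O u c + O v c) ->
  bounded_op W T.
Proof.
move=> E Z [M [Mp HM]] L.
have zc : forall (a : R[i]) (u v : idx -> R[i]), zout W u -> zout W v -> zout W (fun c => a * u c + v c).
  by move=> a u v Hu Hv x Hx; rewrite (Hu x Hx) (Hv x Hx) mulr0 addr0.
split; [|split].
- move=> u [Hz Hf]; rewrite E //; split; first exact: Z.
  apply: le_lt_trans (HM _ Hz) _; apply: lte_mul_pinfty => //; by rewrite lee_fin.
- move=> a u v [Hu _] [Hv _]; rewrite (E _ (zc a u v Hu Hv)) (E _ Hu) (E _ Hv); exact: L.
- exists (Num.sqrt M) => u [Hu _]; rewrite E // sqr_sqrtr //; exact: HM.
Qed.

Unset Implicit Arguments.
Local Open Scope classical_set_scope.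

Theorem mainTheorem8 (R : realType) (W : Wtype) (d : nat) (hd : (1 <= d)%N) :
  exists T : (idx -> R[i]) -> (idx -> R[i]),
    (forall u, inH W u -> T u = CoxW W d u) /\
    bounded_op W T /\
    exists S : (idx -> R[i]) -> (idx -> R[i]),
      bounded_op W S /\
      (forall u, inL2 W u -> S (T u) = u /\ T (S u) = u).
Proof.
exists (CoxW W d); split => //; split.
  apply: (@bounded_of R W _ (Texp W d)).
  - by move=> u Hu; exact: CoxW_eq.
  - exact: Zp_Texp.
  - exact: Bnd_Texp.
  - by move=> a u v; exact: Texp_lin.
exists (Sexp W d); split.
  apply: (@bounded_of R W _ (Sexp W d)) => //.
  - exact: Zp_Sexp.
  - exact: Bnd_Sexp.
  - by move=> a u v; exact: Sexp_lin.
move=> u [Hu _]; rewrite CoxW_eq // ST; split => //.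
rewrite CoxW_eq ?TS //; exact: Zp_Sexp.
Qed.
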